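(* Let $k$ be a field, $A$ a commutative $k$-algebra, $k_n=k[t]/(t^{n+1})$, and $B$ a $k_n$-algebra with an isomorphism $gr\,B\simeq A\otimes_kk_n$ such that $B$ induces a deformation of $D(A)$. Let $\tau:D(B)\to D(A)$ be the residue map and suppose there is a $k$-algebra homomorphism $s:D(A)\to D(B)$ with $\tau\circ s=\mathrm{id}$. Regard $B$ as a left $A\otimes_kk_n$-module via $a\cdot b=s(a)(b)$ for $a\in A\subset D(A)$ (and $t$ acting by multiplication). Then (i) the residue map $\beta:B\to B/tB=A$ is a homomorphism of left $A$-modules; (ii) $B$ is a free $A\otimes_kk_n$-module of rank $1$.
   Context: All differential operators are $k[t]$-linear. For a $k_n$-algebra $C$, $D(C)=\bigcup_mD^m(C)$ with $D^m(C)=\{d\in\operatorname{End}_{k_n}(C): [f_m,\dots,[f_0,d]\dots]=0\ \forall f_i\in C\}$ ($f$ acting by left multiplication, $[f,d]=fd-df$); $D(A)$ is the ring of $k$-linear differential operators on $A$, containing $A$ as left multiplications. $gr$ is taken for the $t$-adic filtration. The natural map $\gamma:gr\,D(B)\to\operatorname{End}_{k_n}(gr\,B)$ sends the class of $d\in t^iD(B)$ to the endomorphism $t^jB/t^{j+1}B\to t^{i+j}B/t^{i+j+1}B$ induced by $d$; it lands in $D(gr\,B)$. $B$ induces a deformation of $D(A)$ if $\gamma:gr\,D(B)\to D(gr\,B)$ is an isomorphism; then, as $D(gr\,B)\simeq D(A\otimes k_n)=D(A)\otimes k_n$, $D(B)$ is an $n$-th order deformation of $D(A)$, and $\tau$ is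 the composite $D(B)\to D(B)/tD(B)\simeq D(A)$ (each operator $d$ is sent to the operator it induces on $B/tB=A$). *)

(* Defs.v *)
From HB Require Import structures.
From mathcomp Require Import all_boot all_order all_algebra.

Set Implicit Arguments.
Unset Strict Implicit.
Unset Printing Implicit Defensive.

Import GRing.Theory.
Local Open Scope ring_scope.

Definition klinear (k : nzRingType) (V : lmodType k) (d : V -> V) : Prop :=
  forall (c : k) (x y : V), d (c *: x + y) = c *: d x + d y.

Definition comm_op (V : zmodType) (mul : V -> V -> V) (f : V) (d : V -> V)
  : V -> V := fun x => mul f (d x) - d (mul f x).

Fixpoint itcomm (V : zmodType) (mul : V -> V -> V) (fs : seq V) (d : V -> V)
  : V -> V :=
  match fs with
  | [::] => d
  | f :: fs' => comm_op mul f (itcomm mul fs' d)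
  end.

Definition diffop_of_order (V : zmodType) (mul : V -> V -> V) (m : nat)
  (d : V -> V) : Prop :=
  forall fs : seq V, size fs = m.+1 -> forall x, itcomm mul fs d x = 0.

Definition is_kdiffop (k : nzRingType) (V : lmodType k) (mul : V -> V -> V)
  (d : V -> V) : Prop :=
  klinear d /\ exists m, diffop_of_order mul m d.

(* d in D(C) for a k_n-algebra C, t being the image of the variable of k_n:
   k_n-linear (= k-linear and commuting with t) differential operators *)
Definition is_kndiffop (k : nzRingType) (V : lmodType k) (mul : V -> V -> V)
  (tt : V) (d : V -> V) : Prop :=
  is_kdiffop mul d /\ forall x, d (mul tt x) = mul tt (d x).

(* ---------- A (x)_k k_n  =  A[t]/(t^(n+1)), as coefficient vectors ---------- *)

Definition trunc (k : nzRingType) (A : comAlgType k) (n : nat) :=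
  {ffun 'I_n.+1 -> A}.

Definition trunc_mul (k : nzRingType) (A : comAlgType k) (n : nat)
  (x y : {ffun 'I_n.+1 -> A}) : {ffun 'I_n.+1 -> A} :=
  [ffun l : 'I_n.+1 =>
     \sum_(i < n.+1) \sum_(j < n.+1 | (i + j)%N == val l) x i * y j].

(* the variable t of k_n (equal to 0 when n = 0) *)
Definition trunc_t (k : nzRingType) (A : comAlgType k) (n : nat)
  : {ffun 'I_n.+1 -> A} :=
  [ffun l : 'I_n.+1 => if val l == 1%N then 1 else 0].

(* the homogeneous element a t^j (zero if j > n) *)
Definition trunc_mono (k : nzRingType) (A : comAlgType k) (n j : nat) (a : A)
  : {ffun 'I_n.+1 -> A} :=
  [ffun l : 'I_n.+1 => if val l == j then a else 0].

(* The degree-j component t^jB/t^{j+1}B of gr B is handled through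
   representatives in t^jB = { t^j * b }: theta j x is the image in A (= the
   coefficient of t^j in A (x) k_n) of the class of x in t^jB/t^{j+1}B.
   The conditions say: theta j is k-linear, well defined and injective on
   t^jB/t^{j+1}B (kernel exactly t^{j+1}B), surjective onto A, and the sum of
   the theta j is a graded k_n-algebra isomorphism (multiplicative, unital,
   commuting with t). *)
Definition gr_iso (k : nzRingType) (A B : comAlgType k) (n : nat) (t : B)
  (theta : nat -> B -> A) : Prop :=
  [/\ (forall j (c : k) (x y : B),
         theta j (c *: x + y) = c *: theta j x + theta j y),
      (forall j, (j <= n)%N -> forall b : B,
         theta j (t ^+ j * b) = 0 <-> exists b', t ^+ j * b = t ^+ j.+1 * b'),
      (forall j, (j <= n)%N -> forall a : A, exists b : B,
         theta j (t ^+ j * b) = a),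
      (forall i j, (i + j <= n)%N -> forall b c : B,
         theta (i + j)%N ((t ^+ i * b) * (t ^+ j * c))
         = theta i (t ^+ i * b) * theta j (t ^+ j * c)) &
      theta 0%N 1 = 1] /\
      (forall j, (j < n)%N -> forall b : B,
         theta j.+1 (t * (t ^+ j * b)) = theta j (t ^+ j * b)).

(* gamma_rel i e E : E (an endomorphism of A (x) k_n ~ gr B) is the image under
   gamma of the class of e in t^iD(B)/t^{i+1}D(B), i.e. E is k-linear and sends
   the class of x in t^jB/t^{j+1}B to the class of e x in
   t^{i+j}B/t^{i+j+1}B (transported through theta). *)
Definition gamma_rel (k : nzRingType) (A B : comAlgType k) (n : nat) (t : B)
  (theta : nat -> B -> A) (i : nat) (e : B -> B)
  (E : {ffun 'I_n.+1 -> A} -> {ffun 'I_n.+1 -> A}) : Prop :=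
  klinear E /\
  forall j, (j <= n)%N -> forall b : B,
    E (trunc_mono n j (theta j (t ^+ j * b)))
    = trunc_mono n (i + j) (theta (i + j)%N (e (t ^+ j * b))).

(* B induces a deformation of D(A): gamma : gr D(B) = (+)_i t^iD(B)/t^{i+1}D(B)
   -> D(gr B) is bijective.  An element of gr D(B) is given by a family
   (class of t^i d_i)_{i <= n} with d_i in D(B). *)
Definition induces_deformation (k : nzRingType) (A B : comAlgType k) (n : nat)
  (t : B) (theta : nat -> B -> A) : Prop :=
  (forall E : {ffun 'I_n.+1 -> A} -> {ffun 'I_n.+1 -> A},
     is_kndiffop (@trunc_mul k A n) (trunc_t A n) E ->
     exists (d : 'I_n.+1 -> B -> B)
            (Es : 'I_n.+1 -> {ffun 'I_n.+1 -> A} -> {ffun 'I_n.+1 -> A}),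
       [/\ forall i : 'I_n.+1, is_kndiffop *%R t (d i),
           forall i : 'I_n.+1, gamma_rel t theta i (fun x => t ^+ i * d i x) (Es i) &
           forall y, E y = \sum_(i < n.+1) Es i y]) /\
  (forall (d : 'I_n.+1 -> B -> B)
          (Es : 'I_n.+1 -> {ffun 'I_n.+1 -> A} -> {ffun 'I_n.+1 -> A}),
     (forall i : 'I_n.+1, is_kndiffop *%R t (d i)) ->
     (forall i : 'I_n.+1, gamma_rel t theta i (fun x => t ^+ i * d i x) (Es i)) ->
     (forall y, \sum_(i < n.+1) Es i y = 0) ->
     forall i : 'I_n.+1, exists d' : B -> B,
       is_kndiffop *%R t d' /\ forall x, t ^+ i * d i x = t ^+ i.+1 * d' x).

Definition DA_DB_alg_hom (k : nzRingType) (A B : comAlgType k) (t : B)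
  (s : (A -> A) -> (B -> B)) : Prop :=
  [/\ (forall P, is_kdiffop *%R P -> is_kndiffop *%R t (s P)),
      (forall P Q, is_kdiffop *%R P -> is_kdiffop *%R Q -> forall x,
         s (fun y => P y + Q y) x = s P x + s Q x),
      (forall (c : k) P, is_kdiffop *%R P -> forall x,
         s (fun y => c *: P y) x = c *: s P x),
      (forall P Q, is_kdiffop *%R P -> is_kdiffop *%R Q -> forall x,
         s (fun y => P (Q y)) x = s P (s Q x)) &
      (forall x, s (fun y => y) x = x)].

Definition tens_act (k : nzRingType) (A B : comAlgType k) (n : nat) (t : B)
  (s : (A -> A) -> (B -> B)) (x : {ffun 'I_n.+1 -> A}) (b : B) : B :=
  \sum_(j < n.+1) t ^+ j * s (fun y => x j * y) b.

(* Main.v *)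
Require Import Defs.
From HB Require Import structures.
From mathcomp Require Import all_boot all_order all_algebra.
From Stdlib Require Import FunctionalExtensionality.
Import GRing.Theory.
Local Open Scope ring_scope.

Lemma Lkd (k : fieldType) (A : comAlgType k) (a : A) :
  is_kdiffop *%R (fun y : A => a * y).
Proof.
split.
  by move=> c x y; rewrite mulrDr scalerAr.
exists 0%N => -[|f [|? ?]] //= _ x.
by rewrite /comm_op mulrCA subrr.
Qed.

Lemma sum_pick (R : zmodType) (N m : nat) (F : nat -> R) : (m < N)%N ->
  \sum_(j < N) (if val j == m then F (val j) else 0) = F m.
Proof.
move=> hm; rewrite -big_mkcond /= big_ord1_eq hm //.
Qed.

Theorem lemma9p6 (k : fieldType) (A B : comAlgType k) (n : nat) (t : B)
  (theta : nat -> B -> A) (s : (A -> A) -> (B -> B)) :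
  t ^+ n.+1 = 0 ->
  gr_iso n t theta ->
  induces_deformation n t theta ->
  DA_DB_alg_hom t s ->
  (* tau o s = id : s P induces P on B/tB = A *)
  (forall P : A -> A, is_kdiffop *%R P -> forall b : B,
     theta 0%N (s P b) = P (theta 0%N b)) ->
  ((forall b1 b2 : B, theta 0%N (b1 + b2) = theta 0%N b1 + theta 0%N b2) /\
   (forall (a : A) (b : B), theta 0%N (s (fun y => a * y) b) = a * theta 0%N b))
  /\
  (exists e : B, forall b : B,
     exists! x : {ffun 'I_n.+1 -> A}, tens_act t s x e = b).
Proof.
move=> tn [[Hlin Hker Hsurj Hmul H01] Hshift] _ [Hs_diff Hs_add Hs_scal Hs_comp Hs_id] Htau.
have thD j x y : theta j (x + y) = theta j x + theta j y.
  by rewrite -[x in LHS]scale1r Hlin scale1r.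
have th0 j : theta j 0 = 0.
  have h := thD j 0 0; rewrite addr0 in h.
  by apply: (addrI (theta j 0)); rewrite addr0 -h.
have thB j x y : theta j (x - y) = theta j x - theta j y.
  apply/eqP; rewrite eq_sym subr_eq -thD subrK //.
have thS j b : (j <= n)%N -> theta j (t ^+ j * b) = theta 0%N b.
  elim: j => [|j IH] hj; first by rewrite expr0 mul1r.
  by rewrite exprS -mulrA Hshift // IH // ltnW.
set L := fun a : A => fun y : A => a * y.
have sLD a a' b : s (L (a + a')) b = s (L a) b + s (L a') b.
  rewrite -Hs_add; try exact: Lkd.
  by congr (s _ b); apply: functional_extensionality => y; rewrite /L mulrDl.
have sL0 b : s (L 0) b = 0.
  have h := sLD 0 0 b; rewrite addr0 in h.
  by apply: (addrI (s (L 0) b)); rewrite addr0 -h.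
have sLN a b : s (L (- a)) b = - s (L a) b.
  by apply/eqP; rewrite -subr_eq0 opprK -sLD addNr sL0.
have taD (x y : {ffun 'I_n.+1 -> A}) e : tens_act t s (x + y) e = tens_act t s x e + tens_act t s y e.
  rewrite /tens_act -big_split /=; apply: eq_bigr => j _.
  by rewrite ffunE sLD mulrDr.
have taN (x : {ffun 'I_n.+1 -> A}) e : tens_act t s (- x) e = - tens_act t s x e.
  rewrite /tens_act -sumrN; apply: eq_bigr => j _.
  by rewrite ffunE sLN mulrN.
have taL a b : theta 0%N (s (L a) b) = a * theta 0%N b.
  by rewrite Htau //; exact: Lkd.
split; first by split => //.
have ta0 e : tens_act t s (0 : {ffun 'I_n.+1 -> A}) e = 0.
  rewrite /tens_act big1 // => j _; by rewrite ffunE sL0 mulr0.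
have surj : forall d, (d <= n.+1)%N -> forall b,
    exists x : {ffun 'I_n.+1 -> A}, tens_act t s x 1 = t ^+ (n.+1 - d) * b.
  move=> d; elim: d => [|d IH] hd b.
    by exists 0; rewrite subn0 tn mul0r; apply: ta0.
  have hm : (n.+1 - d.+1 <= n)%N by rewrite subSS leq_subr.
  set m := (n.+1 - d.+1)%N in hm *.
  set a := theta 0%N b.
  have e0 : tens_act t s (trunc_mono n m a) 1 = t ^+ m * s (L a) 1.
    rewrite /tens_act.
    transitivity (\sum_(j < n.+1)
        (if val j == m then (fun i => t ^+ i * s (L a) 1) (val j) else 0)).
      apply: eq_bigr => j _; rewrite ffunE; case: eqP => // _.
      by rewrite sL0 mulr0.
    exact: (@sum_pick _ n.+1 m (fun i : nat => t ^+ i * s (L a) 1)).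
  have hc : theta m (t ^+ m * (b - s (L a) 1)) = 0.
    by rewrite thS // thB taL H01 mulr1 subrr.
  have [b' hb'] := (Hker m hm _).1 hc.
  have [x' hx'] := IH (ltnW hd) b'.
  exists (trunc_mono n m a + x').
  rewrite taD e0 hx'.
  have -> : (n.+1 - d = m.+1)%N by rewrite /m subSS subSn.
  by rewrite -hb' -mulrDr addrC subrK.
have inj : forall z : {ffun 'I_n.+1 -> A}, tens_act t s z 1 = 0 -> z = 0.
  move=> z hz.
  suff: forall m, (m <= n.+1)%N -> forall l : 'I_n.+1, (l < m)%N -> z l = 0.
    move=> H; apply/ffunP => l; rewrite ffunE; exact: (H n.+1).
  move=> m; elim: m => [|m IH] hm l hl //.
  set F := fun i : nat => t ^+ i * s (L (z (inord i))) 1.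
  set w := \sum_(j < n.+1)
     (if (m < val j)%N then t ^+ (val j - m.+1) * s (L (z j)) 1 else 0).
  have tw : forall j : 'I_n.+1, t ^+ j * s (L (z j)) 1 =
     (if val j == m then F (val j) else 0) + t ^+ m * (t *
     (if (m < val j)%N then t ^+ (val j - m.+1) * s (L (z j)) 1 else 0)).
    move=> j; rewrite /F inord_val; case: (ltngtP j m) => hj.
    - by rewrite (IH (ltnW hm)) // sL0 !mulr0 addr0.
    - rewrite add0r mulrA -exprSr mulrA -exprD.
      by rewrite subnKC.
    - by rewrite !mulr0 addr0.
  have hz' : tens_act t s z 1 = F m + t ^+ m * (t * w).
    rewrite /tens_act (eq_bigr _ (fun j _ => tw j)) big_split /= sum_pick //.
    by rewrite -!mulr_sumr.
  have htw : theta 0%N (t * w) = 0.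
    have := (Hker 0%N (leq0n n) (t * w)).2; rewrite expr0 !mul1r; apply.
    by exists w; rewrite expr1.
  have zm : z (inord m) = 0.
    have := congr1 (theta m) hz'; rewrite hz th0 thD (thS _ (t * w)) // htw addr0.
    by rewrite /F thS // taL H01 mulr1.
  case: (ltngtP l m) => hlm.
  - exact: (IH (ltnW hm)).
  - by rewrite ltnS leqNgt hlm in hl.
  - by rewrite -zm; congr (z _); apply: val_inj; rewrite /= inordK // hlm.
exists 1 => b.
have [x hx] := surj n.+1 (leqnn _) b.
rewrite subnn expr0 mul1r in hx.
exists x; split => // y hy.
have : tens_act t s (x - y) 1 = 0 by rewrite taD taN hx hy subrr.
by move/inj/eqP; rewrite subr_eq0 => /eqP.
Qed.
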